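(* Let $V$ be a finite set of truth values and $\models_{\mathcal{D},\mathcal{D}}$ a pure consequence truth-relation on $V$ (constant expressive semantics). Then it admits exactly the same regular connectives as classical logic: a regularity rule is satisfied by some connective for $\models_{\mathcal{D},\mathcal{D}}$ iff it is satisfied by some classical connective.
   Context: $V$ contains distinct $1,0$; $\mathcal{D}\subseteq V$ with $1\in\mathcal{D}$, $0\notin\mathcal{D}$; $\gamma\models_{\mathcal{D},\mathcal{D}}\delta$ iff ($\gamma\subseteq\mathcal{D}\Rightarrow\delta\cap\mathcal{D}\neq\emptyset$). Semantics: valuations mapping atoms to $V$, connectives interpreted by fixed truth functions, extended compositionally, every assignment to finitely many distinct atoms realized; constant expressive: every value is the constant value of some formula. $\Gamma\vdash\Delta$ iff $v(\Gamma)\models v(\Delta)$ for all $v$. An $n$-ary connective $C$ is regular with rule $(\mathcal{B}^p,\mathcal{B}^c)$, $\mathcal{B}^p,\mathcal{B}^c\subseteq\mathcal{P}(\{1..n\})^2$, if for all $\Gamma,\Delta,F_1..F_n$: $\Gamma\cup\{C(\vec F)\}\vdash\Delta$ iff for all $(B_p,B_c)\in\mathcal{B}^p$, $\Gamma\cup\{F_i:i\in B_p\}\vdash\{F_i:i\in B_c\}\cup\Delta$; $\Gamma\vdash\{C(\vec F)\}\cup\Delta$ iff the same for all $(B_p,B_c)\in\mathcal{B}^c$. Classical logic: $V=\{0,1\}$ with relation $\models_{\{1\},\{1\}}$; classical connectives are truth functions $\{0,1\}^n\to\{0,1\}$. *)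

(* Defs.v *)
From mathcomp Require Import all_boot.
Set Implicit Arguments. Unset Strict Implicit. Unset Printing Implicit Defensive.

Record semantics (V : Type) := Semantics {
  conn : nat -> Type;
  interp : forall n, conn n -> ('I_n -> V) -> V
}.

Inductive form (V : Type) (S : semantics V) : Type :=
| Atom : nat -> form S
| App : forall n, conn S n -> ('I_n -> form S) -> form S.

Fixpoint eval (V : Type) (S : semantics V) (v : nat -> V) (F : form S) : V :=
  match F with
  | Atom k => v k
  | App n c args => interp c (fun i => eval v (args i))
  end.

Definition const_expressive (V : Type) (S : semantics V) : Prop :=
  forall x : V, exists F : form S, forall v : nat -> V, eval v F = x.

Definition truth_rel (V : Type) (D : V -> bool) (gamma delta : V -> Prop) : Prop :=
  (forall x, gamma x -> D x) -> exists2 y, delta y & D y.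

Definition vimg (V : Type) (S : semantics V) (v : nat -> V) (G : form S -> Prop)
  : V -> Prop := fun x => exists2 F, G F & eval v F = x.

Definition cons (V : Type) (D : V -> bool) (S : semantics V)
  (Gamma Delta : form S -> Prop) : Prop :=
  forall v : nat -> V, truth_rel D (vimg v Gamma) (vimg v Delta).

Definition setU1f (V : Type) (S : semantics V) (G : form S -> Prop) (F : form S) :=
  fun H => G H \/ H = F.
Definition setUf (V : Type) (S : semantics V) (G1 G2 : form S -> Prop) :=
  fun H => G1 H \/ G2 H.
Definition fam (V : Type) (S : semantics V) n (Fs : 'I_n -> form S) (B : {set 'I_n}) :=
  fun H => exists2 i, i \in B & H = Fs i.

Definition rule n := {set ({set 'I_n} * {set 'I_n})}.

Definition regular (V : Type) (D : V -> bool) (S : semantics V) n (c : conn S n)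
  (Bp Bc : rule n) : Prop :=
  forall (Gamma Delta : form S -> Prop) (Fs : 'I_n -> form S),
    (cons D (setU1f Gamma (App c Fs)) Delta <->
       (forall b, b \in Bp ->
          cons D (setUf Gamma (fam Fs b.1)) (setUf (fam Fs b.2) Delta)))
 /\ (cons D Gamma (setU1f Delta (App c Fs)) <->
       (forall b, b \in Bc ->
          cons D (setUf Gamma (fam Fs b.1)) (setUf (fam Fs b.2) Delta))).

(* Classical logic: V = {0,1} = bool, D = {1}. *)
Definition classD : bool -> bool := fun b => b.

(* Main.v *)
Require Import Defs.
From mathcomp Require Import all_boot.
From Stdlib Require Import Classical FunctionalExtensionality.
Set Implicit Arguments. Unset Strict Implicit.

Definition Eb n (B : rule n) (d : 'I_n -> bool) : bool :=
  [exists b in B, [forall i in b.1, d i] && [forall i in b.2, ~~ d i]].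

Lemma EbP n (B : rule n) (d : 'I_n -> bool) :
  reflect (exists2 b, b \in B & (forall i, i \in b.1 -> d i) /\ (forall i, i \in b.2 -> ~~ d i))
          (Eb B d).
Proof.
apply: (iffP existsP).
- move=> [b /andP [bB /andP [/forallP H1 /forallP H2]]].
  exists b => //; split=> i Hi; [exact: (implyP (H1 i) Hi) | exact: (implyP (H2 i) Hi)].
- move=> [b bB [H1 H2]]; exists b; rewrite bB /=.
  apply/andP; split; apply/forallP=> i; apply/implyP; [exact: H1|exact: H2].
Qed.

Lemma reg_of (V : Type) (D : V -> bool) (S : semantics V) n (c : conn S n)
  (Bp Bc : rule n) :
  (forall d, Eb Bp d = ~~ Eb Bc d) ->
  (forall v Fs, D (eval v (App c Fs)) = Eb Bp (fun i => D (eval v (Fs i)))) ->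
  regular D c Bp Bc.
Proof.
move=> K Hc Gamma Delta Fs.
rewrite /cons /truth_rel /vimg /setU1f /setUf /fam.
split; split.
- move=> L b bB v Hg.
  case: (classic (exists i, i \in b.2 /\ D (eval v (Fs i)))).
  + move=> [i [Hi Di]]; exists (eval v (Fs i)) => //.
    exists (Fs i) => //; left; by exists i.
  + move=> Hn.
    have Dc : D (eval v (App c Fs)).
      rewrite Hc; apply/EbP; exists b => //; split.
      * move=> i Hi; apply: (Hg (eval v (Fs i))); exists (Fs i) => //; right; by exists i.
      * move=> i Hi; apply/negP => Di; apply: Hn; by exists i.
    have [y [F HF Fy] Dy] := L v (fun x '(ex_intro2 F HF Fx) =>
       match HF with
       | or_introl HG => Hg x (ex_intro2 _ _ F (or_introl HG) Fx)
       | or_intror HE => ltac:(rewrite -Fx HE; exact Dc)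
       end).
    exists y => //; exists F => //; by right.
- move=> R v Hg.
  have Dc : D (eval v (App c Fs)) by apply: (Hg); exists (App c Fs) => //; right.
  move: Dc; rewrite Hc => /EbP [b bB [H1 H2]].
  have [y [F HF Fy] Dy] := R b bB v (fun x '(ex_intro2 F HF Fx) =>
       match HF with
       | or_introl HG => Hg x (ex_intro2 _ _ F (or_introl HG) Fx)
       | or_intror (ex_intro2 i Hi HE) => ltac:(rewrite -Fx HE; exact: H1)
       end).
  case: HF => [[i Hi HE]|HD].
    by move: (H2 i Hi); rewrite -HE Fy Dy.
  by exists y => //; exists F.
- move=> L b bB v Hg.
  case: (classic (exists i, i \in b.2 /\ D (eval v (Fs i)))).
  + move=> [i [Hi Di]]; exists (eval v (Fs i)) => //.
    exists (Fs i) => //; left; by exists i.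
  + move=> Hn.
    have Nc : ~~ D (eval v (App c Fs)).
      rewrite Hc K negbK; apply/EbP; exists b => //; split.
      * move=> i Hi; apply: (Hg (eval v (Fs i))); exists (Fs i) => //; right; by exists i.
      * move=> i Hi; apply/negP => Di; apply: Hn; by exists i.
    have [y [F HF Fy] Dy] := L v (fun x '(ex_intro2 F HF Fx) => Hg x (ex_intro2 _ _ F (or_introl HF) Fx)).
    case: HF => [HD|HE].
      exists y => //; exists F => //; by right.
    by move: Nc; rewrite -HE Fy Dy.
- move=> R v Hg.
  case Dc : (D (eval v (App c Fs))).
    by exists (eval v (App c Fs)) => //; exists (App c Fs) => //; right.
  move: Dc; rewrite Hc K => /negbFE /EbP [b bB [H1 H2]].
  have [y [F HF Fy] Dy] := R b bB v (fun x '(ex_intro2 F HF Fx) =>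
       match HF with
       | or_introl HG => Hg x (ex_intro2 _ _ F HG Fx)
       | or_intror (ex_intro2 i Hi HE) => ltac:(rewrite -Fx HE; exact: H1)
       end).
  case: HF => [[i Hi HE]|HD].
    by move: (H2 i Hi); rewrite -HE Fy Dy.
  by exists y => //; exists F => //; left.
Qed.

Lemma nec (V : Type) (D : V -> bool) (one zero : V) (H1 : D one) (H0 : ~~ D zero)
  (S : semantics V) n (c : conn S n) (Bp Bc : rule n) :
  const_expressive S -> regular D c Bp Bc -> forall d, Eb Bp d = ~~ Eb Bc d.
Proof.
move=> CE R d.
have [F1 HF1] := CE one; have [F0 HF0] := CE zero.
pose Fs := fun i => if d i then F1 else F0.
have ev : forall v i, D (eval v (Fs i)) = d i.
  by move=> v i; rewrite /Fs; case: (d i); rewrite ?HF1 ?HF0 // (negbTE H0).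
pose G := App c Fs.
have ind : forall v w, eval v G = eval w G.
  move=> v w /=; congr (interp c _); apply: functional_extensionality => i.
  by rewrite /Fs; case: (d i); rewrite ?HF1 ?HF0.
pose E0 := fun _ : form S => False.
have famI : forall b : {set 'I_n} * {set 'I_n},
   ((forall i, i \in b.1 -> d i) -> exists2 i, i \in b.2 & d i) ->
   cons D (setUf E0 (fam Fs b.1)) (setUf (fam Fs b.2) E0).
  move=> b Hb v Hg.
  have [|i Hi di] := Hb.
    move=> i Hi; rewrite -(ev v); apply: Hg; exists (Fs i) => //; right; by exists i.
  exists (eval v (Fs i)); last by rewrite ev.
  exists (Fs i) => //; left; by exists i.
have famE : forall b : {set 'I_n} * {set 'I_n},
   cons D (setUf E0 (fam Fs b.1)) (setUf (fam Fs b.2) E0) ->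
   (forall i, i \in b.1 -> d i) -> exists2 i, i \in b.2 & d i.
  move=> b Hb H.
  have [y [F [[i Hi HE]|[]] Fy] Dy] := Hb (fun _ => one) (fun x '(ex_intro2 F HF Fx) =>
     match HF with
     | or_introl HG => match HG with end
     | or_intror (ex_intro2 i Hi HE) => ltac:(rewrite -Fx HE ev; exact: H)
     end).
  by exists i => //; rewrite -(ev (fun _ => one)) -HE Fy.
have [RL RR] := R E0 E0 Fs.
pose v0 := fun _ : nat => one.
case P : (Eb Bp d); case Q : (Eb Bc d) => //=; exfalso.
- move/EbP: P => [b bB [Hb1 Hb2]].
  move/EbP: Q => [b' bB' [Hb1' Hb2']].
  case DG : (D (eval v0 G)).
    have : cons D E0 (setU1f E0 G).
      move=> v _; exists (eval v G); first by exists G => //; right.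
      by rewrite (ind v v0).
    move/RR/(_ b' bB')/famE/(_ Hb1') => [i Hi di].
    by move: (Hb2' i Hi); rewrite di.
  have : cons D (setU1f E0 G) E0.
    move=> v Hg; exfalso.
    have : D (eval v G) by apply: Hg; exists G => //; right.
    by rewrite (ind v v0) DG.
  move/RL/(_ b bB)/famE/(_ Hb1) => [i Hi di].
  by move: (Hb2 i Hi); rewrite di.
- have L : cons D (setU1f E0 G) E0.
    apply/RL => b bB; apply: famI => Hb1.
    apply: NNPP => Hn; move/negbT/negP: P; apply; apply/EbP; exists b => //; split => //.
    by move=> i Hi; apply/negP => di; apply: Hn; exists i.
  have Rr : cons D E0 (setU1f E0 G).
    apply/RR => b bB; apply: famI => Hb1.
    apply: NNPP => Hn; move/negbT/negP: Q; apply; apply/EbP; exists b => //; split => //.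
    by move=> i Hi; apply/negP => di; apply: Hn; exists i.
  have [y [F HF Fy] Dy] := Rr v0 (fun x '(ex_intro2 F HF _) => match HF with end).
  case: HF => [[]|HE]; rewrite HE in Fy.
  have Hall : forall x, vimg v0 (setU1f E0 G) x -> D x.
    move=> x [F' [[]|HE'] Fx]; by rewrite -Fx HE' Fy.
  by have [y' [F' []]] := L v0 Hall.
Qed.

Definition mksem (V : Type) (D : V -> bool) (one zero : V) n (Bp : rule n) : semantics V :=
  @Semantics V (fun m => (V + (m = n))%type)
    (fun m k args => match k with
                     | inl x => x
                     | inr e => if Eb Bp (fun i => D (eq_rect m (fun k => 'I_k -> V) args n e i))
                                then one else zero
                     end).

Lemma suff (V : Type) (D : V -> bool) (one zero : V) (H1 : D one) (H0 : ~~ D zero)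
  n (Bp Bc : rule n) : (forall d, Eb Bp d = ~~ Eb Bc d) ->
  exists (S : semantics V) (c : conn S n), const_expressive S /\ regular D c Bp Bc.
Proof.
move=> K; exists (mksem D one zero Bp); exists (inr erefl); split.
  move=> x; exists (@App _ (mksem D one zero Bp) 0 (inl x) (fun _ => Atom _ 0)) => //.
apply: reg_of => // v Fs /=.
by case: ifP => _; rewrite ?H1 ?(negbTE H0).
Qed.

Theorem theorem6p2 (V : finType) (D : V -> bool) (one zero : V)
  (Hneq : one != zero) (H1 : D one) (H0 : ~~ D zero)
  (n : nat) (Bp Bc : rule n) :
  (exists (S : semantics V) (c : conn S n),
      const_expressive S /\ regular D c Bp Bc)
  <->
  (exists (S : semantics bool) (c : conn S n),
      const_expressive S /\ regular classD c Bp Bc).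
Proof.
split=> [[S [c [CE R]]]|[S [c [CE R]]]].
- by apply: (@suff bool classD true false) => //; exact: (nec H1 H0 CE R).
- by apply: (@suff V D one zero) => //; exact: (@nec bool classD true false _ _ _ _ _ _ _ CE R).
Qed.
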